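(* Let $R$ be a ring, $\Bbbk$ a field of characteristic $0$, and $M$ a $\mathrm{VIC}(R)$-module over $\Bbbk$ that is polynomial of degree $d$ starting at $m$, with $M(R^n)$ finite-dimensional for all $n$. Then there exists $u\ge0$ such that for all $n\ge u$, every elementary matrix in $\mathrm{GL}_n(R)$ acts on $M(R^n)$ by a unipotent operator.
   Context: A linear map $f\colon V\to V$ is unipotent if $f=\mathrm{id}_V+\phi$ with $\phi$ nilpotent. An elementary matrix differs from the identity in exactly one off-diagonal entry. $\mathrm{VIC}(R)$: objects finite-rank free right $R$-modules, morphisms $(f,C)\colon A_1\to A_2$ with $f$ injective and $A_2=f(A_1)\oplus C$, composition $(f_2,C_2)\circ(f_1,C_1)=(f_2f_1,C_2\oplus f_2(C_1))$; a $\mathrm{VIC}(R)$-module is a functor to $\Bbbk$-vector spaces. $DM(A)=M(A\oplus R)/\mathrm{Im}(M(A)\to M(A\oplus R))$. $M$ is polynomial of degree $-1$ starting at $m$ if $M(A)=0$ for $\mathrm{rk}A\ge m$; of degree $d\ge0$ starting at $m$ if all induced maps $M(A_1)\to M(A_2)$ with $\mathrm{rk}A_1\ge m$ are injective and $DM$ is polynomial of degree $d-1$ starting at $m-1$. *)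

(* Defs.v *)
From HB Require Import structures.
From mathcomp Require Import all_boot all_order all_algebra.
Set Implicit Arguments. Unset Strict Implicit. Unset Printing Implicit Defensive.
Import Order.TTheory GRing.Theory Num.Theory.
Local Open Scope ring_scope.

(* Conventions.
   - A finite-rank free right R-module is represented by R^n = 'cV[R]_n
     (column vectors; R acts on the right by v *m r%:M).
   - An R-linear map R^a -> R^b is a matrix f : 'M[R]_(b,a) acting by f *m _.
   - A submodule C of R^b is a predicate 'cV[R]_b -> Prop.
   - A VIC(R)-module over k with finite-dimensional values: M(R^n) = k^(vdim n)
     (row vectors), a morphism (f,C) acting by the matrix vact f C (row vectors
     multiply on the left, so functoriality reads M(g o f) = M(f) *m M(g)). *)

Section VIC.
Variable R : pzRingType.

Definition isVICmor (a b : nat) (f : 'M[R]_(b, a)) (C : 'cV[R]_b -> Prop) : Prop :=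
  (forall x : 'cV[R]_a, f *m x = 0 -> x = 0) /\
  C 0 /\
  (forall u v, C u -> C v -> C (u + v)) /\
  (forall u (r : R), C u -> C (u *m r%:M)) /\
  (forall v : 'cV[R]_b, exists x c, C c /\ v = f *m x + c) /\
  (forall x : 'cV[R]_a, C (f *m x) -> f *m x = 0).

Definition VICcompC (b c : nat) (f2 : 'M[R]_(c, b)) (C1 : 'cV[R]_b -> Prop)
  (C2 : 'cV[R]_c -> Prop) : 'cV[R]_c -> Prop :=
  fun v => exists c2 c1, [/\ C2 c2, C1 c1 & v = c2 + f2 *m c1].

(* the zero submodule (complement of an isomorphism) *)
Definition VICzeroC (n : nat) : 'cV[R]_n -> Prop := fun v => v = 0.

(* standard inclusion A -> A (+) R, R^n -> R^(n+1) (new coordinate last),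
   with complement the last coordinate line *)
Definition incl_mx (n : nat) : 'M[R]_(n.+1, n) :=
  \matrix_(i < n.+1, j < n) ((i : nat) == j)%:R.
Definition incl_C (n : nat) : 'cV[R]_n.+1 -> Prop :=
  fun v => forall i : 'I_n.+1, (i < n)%N -> v i 0 = 0.

(* (f, C) : A1 -> A2 induces (f (+) id, C) : A1 (+) R -> A2 (+) R *)
Definition lift_mx (a b : nat) (f : 'M[R]_(b, a)) : 'M[R]_(b.+1, a.+1) :=
  castmx (addn1 b, addn1 a) (block_mx f 0 0 (1%:M : 'M[R]_1)).
Definition lift_C (b : nat) (C : 'cV[R]_b -> Prop) : 'cV[R]_b.+1 -> Prop :=
  fun v => v ord_max 0 = 0 /\ C (\col_(i < b) v (widen_ord (leqnSn b) i) 0).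

Definition elem_mx (n : nat) (i j : 'I_n) (r : R) : 'M[R]_n :=
  1%:M + r *: delta_mx i j.

Variable k : fieldType.

Record VICmod := {
  vdim : nat -> nat;
  vact : forall a b : nat, 'M[R]_(b, a) -> ('cV[R]_b -> Prop) ->
         'M[k]_(vdim a, vdim b);
  vact_id : forall a, vact (1%:M : 'M[R]_a) (@VICzeroC a) = 1%:M;
  vact_comp : forall a b c (f1 : 'M[R]_(b, a)) C1 (f2 : 'M[R]_(c, b)) C2,
      isVICmor f1 C1 -> isVICmor f2 C2 ->
      vact (f2 *m f1) (VICcompC f2 C1 C2) = vact f1 C1 *m vact f2 C2
}.

(* Subquotient presentation N(n) = k^(pamb n) / rowspace (psub n), with
   maps induced by the matrices pact.  Needed to iterate the derivative D. *)
Record pmod := {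
  pamb : nat -> nat;
  psub : forall n, 'M[k]_(pamb n);
  pact : forall a b : nat, 'M[R]_(b, a) -> ('cV[R]_b -> Prop) ->
         'M[k]_(pamb a, pamb b)
}.

Definition pmod_of (M : VICmod) : pmod :=
  {| pamb := vdim M; psub := fun n => 0; pact := @vact M |}.

(* DN(A) = N(A (+) R) / Im (N(A) -> N(A (+) R)) *)
Definition pderiv (N : pmod) : pmod :=
  {| pamb := fun n => pamb N n.+1;
     psub := fun n => (psub N n.+1 + pact N (incl_mx n) (@incl_C n))%MS;
     pact := fun a b f C => pact N (lift_mx f) (lift_C C) |}.

Definition pvanish (N : pmod) (m : nat) : Prop :=
  forall n, (m <= n)%N -> (1%:M <= psub N n)%MS.

Definition pinj (N : pmod) (m : nat) : Prop :=
  forall a b (f : 'M[R]_(b, a)) C, (m <= a)%N -> isVICmor f C ->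
    forall v : 'rV[k]_(pamb N a),
      (v *m pact N f C <= psub N b)%MS -> (v <= psub N a)%MS.

(* poly_rec j N m : N polynomial of degree j - 1 starting at m *)
Fixpoint poly_rec (j : nat) (N : pmod) (m : nat) : Prop :=
  match j with
  | 0 => pvanish N m
  | j'.+1 => pinj N m /\ poly_rec j' (pderiv N) m.-1
  end.

Definition VICpolynomial (M : VICmod) (d : int) (m : nat) : Prop :=
  match d with
  | Posz n => poly_rec n.+1 (pmod_of M) m
  | Negz 0 => poly_rec 0 (pmod_of M) m
  | Negz _ => False
  end.

Definition unipotent (n : nat) (F : 'M[k]_n) : Prop :=
  exists e : nat, (F - 1%:M) ^+ e = 0.

End VIC.

(* Main.v *)
Require Import Defs.
From HB Require Import structures.
From mathcomp Require Import all_boot all_order all_algebra all_fingroup.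
From Stdlib Require Import FunctionalExtensionality PropExtensionality.
From mathcomp Require Import zify.
Set Implicit Arguments. Unset Strict Implicit. Unset Printing Implicit Defensive.
Import Order.TTheory GRing.Theory Num.Theory.
Local Open Scope ring_scope.

Section MxLemmas.
Variable R : pzRingType.

Lemma mulmxZ_comm m n p (A : 'M[R]_(m,n)) (B : 'M[R]_(n,p)) s :
  (forall x y, GRing.comm (A x y) s) -> A *m (s *: B) = s *: (A *m B).
Proof.
move=> hc; apply/matrixP => x y; rewrite !mxE mulr_sumr; apply: eq_bigr => z _.
by rewrite !mxE mulrA hc mulrA.
Qed.

Lemma delta_comm m n (i : 'I_m) (j : 'I_n) s x y :
  GRing.comm ((delta_mx i j : 'M[R]_(m,n)) x y) s.
Proof. by rewrite mxE; apply/esym/commr_nat. Qed.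

Lemma perm_comm n (t : {perm 'I_n}) s x y :
  GRing.comm ((perm_mx t : 'M[R]_n) x y) s.
Proof. by rewrite /perm_mx !mxE; apply/esym/commr_nat. Qed.

Lemma scaleD_mul n (i j k l : 'I_n) (r s : R) :
  (r *: delta_mx i j : 'M[R]_n) *m (s *: delta_mx k l) =
  if j == k then (r * s) *: delta_mx i l else 0.
Proof.
rewrite -scalemxAl mulmxZ_comm; last exact: delta_comm.
rewrite scalerA; case: eqP => [->|/eqP h]; first by rewrite mul_delta_mx.
by rewrite mul_delta_mx_0 // !scaler0.
Qed.

Lemma elem_mulC n (i j k l : 'I_n) (r s : R) : j != k -> l != i ->
  elem_mx i j r *m elem_mx k l s = elem_mx k l s *m elem_mx i j r.
Proof.
move=> h1 h2; rewrite /elem_mx !mulmxDl !mulmxDr !mul1mx !mulmx1 !scaleD_mul.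
rewrite (negbTE h1) (negbTE h2) !addr0; rewrite -!addrA; congr (_ + _).
by rewrite addrC.
Qed.

Lemma elem_mulD n (i j : 'I_n) (r s : R) : i != j ->
  elem_mx i j r *m elem_mx i j s = elem_mx i j (r + s).
Proof.
move=> h; rewrite /elem_mx !mulmxDl !mulmxDr !mul1mx !mulmx1 !scaleD_mul.
by rewrite eq_sym (negbTE h) addr0 scalerDl -addrA [X in _ + X]addrC.
Qed.

Lemma elem0 n (i j : 'I_n) : @elem_mx R _ i j 0 = 1%:M.
Proof. by rewrite /elem_mx scale0r addr0. Qed.


Lemma elem_comm3 n (i a j : 'I_n) (r : R) : i != a -> a != j -> i != j ->
  elem_mx i a 1 *m elem_mx a j r = elem_mx i j r *m elem_mx a j r *m elem_mx i a 1.
Proof.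
move=> h1 h2 h3.
rewrite /elem_mx !mulmxDl !mulmxDr !mul1mx !mulmx1 !scaleD_mul.
rewrite ?mulmxDl ?mulmxDr ?mul1mx ?mulmx1 ?scaleD_mul.
rewrite eqxx (eq_sym j i) (negbTE h3) (eq_sym j a) (negbTE h2) mul0mx !addr0 !mul1r.
rewrite -!addrA; congr (_ + _); congr (_ + _); congr (_ + _); by rewrite addrC.
Qed.

Lemma perm_conj n (t : {perm 'I_n}) (A : 'M[R]_n) :
  perm_mx t *m A *m perm_mx (t^-1)%g = \matrix_(x, y) A (t x) (t y).
Proof.
by rewrite -row_permE -col_permE; apply/matrixP => x y; rewrite !mxE.
Qed.

Lemma elem_conj n (t : {perm 'I_n}) i j (r : R) :
  perm_mx t *m elem_mx i j r *m perm_mx (t^-1)%g = elem_mx ((t^-1)%g i) ((t^-1)%g j) r.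
Proof.
rewrite perm_conj; apply/matrixP => x y; rewrite !mxE.
rewrite (inj_eq perm_inj).
have E z w : (t z == w) = (z == (t^-1)%g w).
  by apply/eqP/eqP => [<-|->]; rewrite ?permK ?permKV.
by rewrite !E.
Qed.

Lemma perm_mxV n (t : {perm 'I_n}) : perm_mx t *m perm_mx (t^-1)%g = 1%:M :> 'M[R]_n.
Proof. by rewrite -perm_mxM mulgV perm_mx1. Qed.
Lemma perm_mxV' n (t : {perm 'I_n}) : perm_mx (t^-1)%g *m perm_mx t = 1%:M :> 'M[R]_n.
Proof. by rewrite -perm_mxM mulVg perm_mx1. Qed.

Lemma elem_inv n (i j : 'I_n) (r : R) : i != j -> elem_mx i j r *m elem_mx i j (- r) = 1%:M.
Proof. by move=> h; rewrite elem_mulD // subrr elem0. Qed.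
Lemma elem_inv' n (i j : 'I_n) (r : R) : i != j -> elem_mx i j (- r) *m elem_mx i j r = 1%:M.
Proof. by move=> h; rewrite elem_mulD // addNr elem0. Qed.

End MxLemmas.

Notation wd := (widen_ord (leqnSn _)).

Variant ordS_spec q : 'I_q.+1 -> Type :=
 | OrdW (x : 'I_q) : ordS_spec (wd x)
 | OrdM : ordS_spec ord_max.

Lemma ordSP q (x : 'I_q.+1) : ordS_spec x.
Proof.
case: (ltnP x q) => h.
  have -> : x = wd (Ordinal h) by apply: val_inj.
  constructor.
have -> : x = ord_max by apply: val_inj => /=; apply/eqP; rewrite eqn_leq h -ltnS ltn_ord.
constructor.
Qed.

Lemma wd_neq_max q (x : 'I_q) : (widen_ord (leqnSn q) x == ord_max) = false.
Proof. by apply/negbTE; rewrite -val_eqE /= neq_ltn ltn_ord. Qed.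
Lemma max_neq_wd q (x : 'I_q) : (ord_max == widen_ord (leqnSn q) x) = false.
Proof. by rewrite eq_sym wd_neq_max. Qed.

Lemma wd_eq q (x y : 'I_q) : (wd x == wd y :> 'I_q.+1) = (x == y).
Proof. by rewrite -!val_eqE. Qed.

Section Lift.
Variable R : pzRingType.

Lemma lift_ww a b (f : 'M[R]_(b,a)) x y : lift_mx f (wd x) (wd y) = f x y.
Proof.
rewrite /lift_mx castmxE.
have -> : cast_ord (esym (addn1 b)) (wd x) = lshift 1 x by apply: val_inj.
have -> : cast_ord (esym (addn1 a)) (wd y) = lshift 1 y by apply: val_inj.
by rewrite block_mxEul.
Qed.

Lemma lift_wm a b (f : 'M[R]_(b,a)) x : lift_mx f (wd x) ord_max = 0.
Proof.
rewrite /lift_mx castmxE.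
have -> : cast_ord (esym (addn1 b)) (wd x) = lshift 1 x by apply: val_inj.
have -> : cast_ord (esym (addn1 a)) ord_max = rshift a (0 : 'I_1) by apply: val_inj => /=; rewrite addn0.
by rewrite block_mxEur mxE.
Qed.

Lemma lift_mw a b (f : 'M[R]_(b,a)) y : lift_mx f ord_max (wd y) = 0.
Proof.
rewrite /lift_mx castmxE.
have -> : cast_ord (esym (addn1 b)) ord_max = rshift b (0 : 'I_1) by apply: val_inj => /=; rewrite addn0.
have -> : cast_ord (esym (addn1 a)) (wd y) = lshift 1 y by apply: val_inj.
by rewrite block_mxEdl mxE.
Qed.

Lemma lift_mm a b (f : 'M[R]_(b,a)) : lift_mx f ord_max ord_max = 1.
Proof.
rewrite /lift_mx castmxE.
have -> : cast_ord (esym (addn1 b)) ord_max = rshift b (0 : 'I_1) by apply: val_inj => /=; rewrite addn0.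
have -> : cast_ord (esym (addn1 a)) ord_max = rshift a (0 : 'I_1) by apply: val_inj => /=; rewrite addn0.
by rewrite block_mxEdr mxE.
Qed.

Definition liftE := (lift_ww, lift_wm, lift_mw, lift_mm).

Lemma lift_mul a b c (f : 'M[R]_(c,b)) (g : 'M[R]_(b,a)) :
  lift_mx (f *m g) = lift_mx f *m lift_mx g.
Proof.
apply/matrixP => x y; rewrite [RHS]mxE big_ord_recr /=.
case: (ordSP x) => [x'|]; case: (ordSP y) => [y'|]; rewrite !liftE ?mulr0 ?mul0r ?addr0 ?mulr1.
- by rewrite mxE; apply: eq_bigr => z _; rewrite !liftE.
- by rewrite big1 // => z _; rewrite !liftE mulr0.
- by rewrite big1 // => z _; rewrite !liftE mul0r.
- by rewrite big1 ?add0r // => z _; rewrite !liftE mul0r.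
Qed.

Lemma lift1 a : lift_mx (1%:M : 'M[R]_a) = 1%:M.
Proof.
apply/matrixP => x y; rewrite [RHS]mxE.
case: (ordSP x) => [x'|]; case: (ordSP y) => [y'|]; rewrite !liftE ?mxE ?wd_eq ?eqxx ?wd_neq_max ?max_neq_wd //.
Qed.

Lemma lift_elem q (i j : 'I_q) (r : R) :
  lift_mx (elem_mx i j r) = elem_mx (wd i) (wd j) r.
Proof.
apply/matrixP => x y; rewrite /elem_mx [RHS]mxE [in RHS]mxE [X in _ = _ + X]mxE [X in _ = _ + _ * X]mxE.
case: (ordSP x) => [x'|]; case: (ordSP y) => [y'|]; rewrite !liftE ?mxE ?wd_eq ?wd_neq_max ?max_neq_wd ?eqxx ?andbF ?andFb ?mulr0 ?addr0 //=.
Qed.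

Lemma incl_w q (x : 'I_q) y : incl_mx R q (wd x) y = (x == y)%:R.
Proof. by rewrite mxE. Qed.
Lemma incl_m q y : incl_mx R q ord_max y = 0.
Proof. by rewrite mxE /= eqn_leq leqNgt ltn_ord. Qed.

Lemma sum_delta n (x : 'I_n) (F : 'I_n -> R) : \sum_z ((x == z)%:R * F z) = F x.
Proof.
rewrite (bigD1 x) //= eqxx mul1r big1 ?addr0 // => z hz.
by rewrite eq_sym (negbTE hz) mul0r.
Qed.

Lemma sum_delta' n (x : 'I_n) (F : 'I_n -> R) : \sum_z (F z * (z == x)%:R) = F x.
Proof.
rewrite (bigD1 x) //= eqxx mulr1 big1 ?addr0 // => z hz.
by rewrite (negbTE hz) mulr0.
Qed.

Lemma lift_incl a b (f : 'M[R]_(b,a)) :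
  lift_mx f *m incl_mx R a = incl_mx R b *m f.
Proof.
apply/matrixP => x y; rewrite !mxE big_ord_recr /= incl_m mulr0 addr0.
case: (ordSP x) => [x'|].
- rewrite (eq_bigr (fun z => f x' z * (z == y)%:R)); last by move=> z _; rewrite incl_w lift_ww.
  rewrite sum_delta' -(sum_delta x' (fun z => f z y)).
  by apply: eq_bigr => z _; rewrite mxE.
- rewrite big1; last by move=> z _; rewrite lift_mw mul0r.
  by rewrite big1 // => z _; rewrite incl_m mul0r.
Qed.

Lemma incl_incl q x y : (incl_mx R q.+1 *m incl_mx R q) x y = ((x : nat) == y)%:R.
Proof.
rewrite !mxE big_ord_recr /= incl_m mulr0 addr0.
rewrite (bigD1 y) //= big1 ?addr0.
  by rewrite !mxE eqxx mulr1.
by move=> z hz; rewrite !mxE /=; move: hz; rewrite -val_eqE /= => /negbTE ->; rewrite mulr0.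
Qed.

End Lift.
Lemma predext T (P Q : T -> Prop) : (forall x, P x <-> Q x) -> P = Q.
Proof.
move=> h; apply: functional_extensionality => x.
by apply: propositional_extensionality.
Qed.

Section Cols.
Variable R : pzRingType.

Lemma addE m n (u v : 'M[R]_(m,n)) x y : (u + v) x y = u x y + v x y.
Proof. by rewrite mxE. Qed.

Definition top q (v : 'cV[R]_q.+1) : 'cV[R]_q := \col_(i < q) v (wd i) 0.

Lemma topE q (v : 'cV[R]_q.+1) : top v = (incl_mx R q)^T *m v.
Proof.
apply/matrixP => x y; rewrite !mxE (ord1 y) big_ord_recr /= mxE incl_m mul0r addr0.
rewrite (bigD1 x) //= big1 ?addr0; first by rewrite mxE incl_w eqxx mul1r.
by move=> z hz; rewrite mxE incl_w (negbTE hz) mul0r.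
Qed.

Lemma top_lift a b (f : 'M[R]_(b,a)) (v : 'cV[R]_a.+1) :
  top (lift_mx f *m v) = f *m top v.
Proof.
apply/matrixP => x y; rewrite !mxE (ord1 y) big_ord_recr /= lift_wm mul0r addr0.
by apply: eq_bigr => z _; rewrite !mxE lift_ww.
Qed.

Lemma last_lift a b (f : 'M[R]_(b,a)) (v : 'cV[R]_a.+1) :
  (lift_mx f *m v) ord_max 0 = v ord_max 0.
Proof.
rewrite !mxE big_ord_recr /= lift_mm mul1r big1 ?add0r // => z _.
by rewrite lift_mw mul0r.
Qed.

Lemma top_incl q (w : 'cV[R]_q) : top (incl_mx R q *m w) = w.
Proof.
apply/matrixP => x y; rewrite !mxE (ord1 y).
rewrite (eq_bigr (fun z => (x == z)%:R * w z 0)); last by move=> z _; rewrite incl_w.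
by rewrite sum_delta.
Qed.

Lemma last_incl q (w : 'cV[R]_q) : (incl_mx R q *m w) ord_max 0 = 0.
Proof. by rewrite mxE big1 // => z _; rewrite incl_m mul0r. Qed.

Lemma colP2 q (v1 v2 : 'cV[R]_q.+1) :
  top v1 = top v2 -> v1 ord_max 0 = v2 ord_max 0 -> v1 = v2.
Proof.
move=> h1 h2; apply/matrixP => x y; rewrite (ord1 y).
case: (ordSP x) => [x'|] //.
by move/matrixP: h1 => /(_ x' 0); rewrite !mxE.
Qed.

Definition mkcol q (w : 'cV[R]_q) (t : R) : 'cV[R]_q.+1 :=
  \col_(i < q.+1) (if (insub (val i) : option 'I_q) is Some i' then w i' 0 else t).

Lemma top_mkcol q (w : 'cV[R]_q) t : top (mkcol w t) = w.
Proof.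
apply/matrixP => x y; rewrite (ord1 y) !mxE /=.
rewrite insubT /=; first by rewrite ltn_ord.
by move=> h; congr (w _ 0); apply: val_inj.
Qed.

Lemma last_mkcol q (w : 'cV[R]_q) t : mkcol w t ord_max 0 = t.
Proof. by rewrite !mxE /= insubF // ltnn. Qed.

Lemma top0 q : top (0 : 'cV[R]_q.+1) = 0.
Proof. by rewrite topE mulmx0. Qed.
Lemma topD q (u v : 'cV[R]_q.+1) : top (u + v) = top u + top v.
Proof. by rewrite !topE mulmxDr. Qed.
Lemma topN q (u : 'cV[R]_q.+1) : top (- u) = - top u.
Proof. by rewrite !topE mulmxN. Qed.
Lemma topM q (u : 'cV[R]_q.+1) (B : 'M[R]_1) : top (u *m B) = top u *m B.
Proof. by rewrite !topE mulmxA. Qed.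
Lemma lastM q (u : 'cV[R]_q.+1) (r : R) : (u *m r%:M) ord_max 0 = u ord_max 0 * r.
Proof. by rewrite !mxE big_ord1 mxE eqxx mulr1n. Qed.

Lemma incl_C_top q (v : 'cV[R]_q.+1) : incl_C v <-> top v = 0.
Proof.
split.
- move=> h; apply/matrixP => x y; rewrite (ord1 y) !mxE; apply: h => /=; exact: ltn_ord.
- move=> h i hi; have := h; move/matrixP => /(_ (Ordinal hi) 0).
  rewrite !mxE => <-; congr (v _ 0); exact: val_inj.
Qed.

Lemma unitVIC n (g g' : 'M[R]_n) : g' *m g = 1%:M -> g *m g' = 1%:M ->
  isVICmor g (@VICzeroC R n).
Proof.
move=> h1 h2; rewrite /isVICmor /VICzeroC; split.
  by move=> x hx; rewrite -(mul1mx x) -h1 -mulmxA hx mulmx0.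
split=> //; split; first by move=> u v -> ->; rewrite addr0.
split; first by move=> u r ->; rewrite mul0mx.
split; last by [].
move=> v; exists (g' *m v); exists 0; split=> //.
by rewrite addr0 mulmxA h2 mul1mx.
Qed.

Lemma inclVIC q : isVICmor (incl_mx R q) (@incl_C R q).
Proof.
split.
  by move=> x hx; rewrite -(top_incl x) hx top0.
split; first by apply/incl_C_top; rewrite top0.
split; first by move=> u v /incl_C_top hu /incl_C_top hv; apply/incl_C_top; rewrite topD hu hv addr0.
split; first by move=> u r /incl_C_top hu; apply/incl_C_top; rewrite topM hu mul0mx.
split.
  move=> v; exists (top v); exists (v - incl_mx R q *m top v); split; last by rewrite addrC subrK.
  by apply/incl_C_top; rewrite topD topN top_incl subrr.
by move=> x /incl_C_top; rewrite top_incl => ->; rewrite mulmx0.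
Qed.

Lemma liftVIC a b (f : 'M[R]_(b,a)) C : isVICmor f C -> isVICmor (lift_mx f) (lift_C C).
Proof.
case=> hinj [h0 [hadd [hsc [hdec hint]]]].
split.
  move=> x hx; apply: colP2; last by rewrite -(last_lift f) hx !mxE.
  by rewrite top0; apply: hinj; rewrite -top_lift hx top0.
split; first by split; [rewrite mxE | rewrite -/(top 0) top0].
split.
  move=> u v [hu1 hu2] [hv1 hv2]; split; first by rewrite mxE hu1 hv1 addr0.
  by rewrite -/(top (u + v)) topD; apply: hadd.
split.
  move=> u r [hu1 hu2]; split; first by rewrite lastM hu1 mul0r.
  by rewrite -/(top (u *m r%:M)) topM; apply: hsc.
split.
  move=> v; have [x [c [hc he]]] := hdec (top v).
  exists (mkcol x (v ord_max 0)); exists (mkcol c 0); split.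
    by split; [rewrite last_mkcol | rewrite -/(top (mkcol c 0)) top_mkcol].
  apply: colP2.
    by rewrite topD top_lift !top_mkcol.
  by rewrite addE last_lift !last_mkcol addr0.
move=> x [h1 h2]; apply: colP2.
  rewrite -/(top (lift_mx f *m x)) in h2.
  by rewrite top0 top_lift; apply: hint; rewrite -top_lift.
by rewrite h1 mxE.
Qed.

Lemma compVIC a b c (f1 : 'M[R]_(b,a)) C1 (f2 : 'M[R]_(c,b)) C2 :
  isVICmor f1 C1 -> isVICmor f2 C2 -> isVICmor (f2 *m f1) (VICcompC f2 C1 C2).
Proof.
case=> i1 [z1 [a1 [s1 [d1 t1]]]]; case=> i2 [z2 [a2 [s2 [d2 t2]]]].
split; first by move=> x hx; apply: i1; apply: i2; rewrite mulmxA.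
split; first by exists 0, 0; split; rewrite ?mulmx0 ?addr0.
split.
  move=> u v [c2 [c1 [hc2 hc1 ->]]] [c2' [c1' [hc2' hc1' ->]]].
  exists (c2 + c2'), (c1 + c1'); split; [exact: a2 | exact: a1 |].
  by rewrite mulmxDr addrACA.
split.
  move=> u r [c2 [c1 [hc2 hc1 ->]]]; exists (c2 *m r%:M), (c1 *m r%:M); split;
    [exact: s2 | exact: s1 |]; by rewrite mulmxDl mulmxA.
split.
  move=> v; have [y [c2 [hc2 ->]]] := d2 v; have [x [c1 [hc1 ->]]] := d1 y.
  exists x, (c2 + f2 *m c1). split; first by exists c2, c1; split.
  by rewrite mulmxDr mulmxA -addrA [c2 + _]addrC.
move=> x [c2 [c1 [hc2 hc1 he]]].
have e2 : f2 *m (f1 *m x - c1) = c2 by rewrite mulmxBr mulmxA he addrK.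
have h0 : f2 *m (f1 *m x - c1) = 0 by apply: t2; rewrite e2.
have e1 : f1 *m x = c1 by apply/eqP; rewrite -subr_eq0; apply/eqP; apply: i2.
by rewrite -mulmxA (t1 x) ?mulmx0 // e1.
Qed.

Lemma liftC0 b : lift_C (@VICzeroC R b) = @VICzeroC R b.+1.
Proof.
apply: predext => v; rewrite /lift_C /VICzeroC; split.
  move=> [h1 h2]; apply: colP2; [by rewrite top0 | by rewrite h1 mxE].
by move=> ->; split; [rewrite mxE | rewrite -/(top 0) top0].
Qed.

Lemma compC0 a b (g : 'M[R]_(b,a)) : VICcompC g (@VICzeroC R a) (@VICzeroC R b) = @VICzeroC R b.
Proof.
apply: predext => v; rewrite /VICcompC /VICzeroC; split.
  by move=> [c2 [c1 [-> -> ->]]]; rewrite mulmx0 addr0.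
by move=> ->; exists 0, 0; split; rewrite ?mulmx0 ?addr0.
Qed.

Lemma liftC_comp b c (f2 : 'M[R]_(c,b)) (C1 : 'cV[R]_b -> Prop) C2 :
  lift_C (VICcompC f2 C1 C2) = VICcompC (lift_mx f2) (lift_C C1) (lift_C C2).
Proof.
apply: predext => v; rewrite /lift_C /VICcompC -!/(top _); split.
  move=> [hl [c2 [c1 [hc2 hc1 he]]]].
  exists (mkcol c2 0), (mkcol c1 0); split.
  - by split; [rewrite last_mkcol | rewrite -/(top _) top_mkcol].
  - by split; [rewrite last_mkcol | rewrite -/(top _) top_mkcol].
  apply: colP2; first by rewrite topD top_lift !top_mkcol.
  by rewrite addE last_lift !last_mkcol hl addr0.
move=> [c2 [c1 [[h21 h22] [h11 h12] ->]]]; split.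
  by rewrite addE last_lift h21 h11 addr0.
exists (top c2), (top c1); split; [exact: h22 | exact: h12 |].
change (top (c2 + lift_mx f2 *m c1) = top c2 + f2 *m top c1).
by rewrite topD top_lift.
Qed.

Lemma liftC_incl a b (f : 'M[R]_(b,a)) (C : 'cV[R]_b -> Prop) :
  VICcompC (lift_mx f) (@incl_C R a) (lift_C C) = VICcompC (incl_mx R b) C (@incl_C R b).
Proof.
apply: predext => v; rewrite /lift_C /VICcompC; split.
  move=> [c2 [c1 [[h21 h22] /incl_C_top h1 ->]]].
  exists (mkcol 0 ((lift_mx f *m c1) ord_max 0)), (top c2); split.
  - by apply/incl_C_top; rewrite top_mkcol.
  - by rewrite -/(top _) in h22.
  apply: colP2; first by rewrite !topD top_lift h1 mulmx0 addr0 top_mkcol top_incl add0r.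
  by rewrite !addE last_mkcol h21 add0r last_incl addr0.
move=> [c2 [c1 [/incl_C_top h2 h1 ->]]].
exists (mkcol c1 0), (mkcol 0 (c2 ord_max 0)); split.
- split; [by rewrite last_mkcol | by rewrite -[X in C X]/(top (mkcol c1 0)) top_mkcol].
- by apply/incl_C_top; rewrite top_mkcol.
apply: colP2; first by rewrite !topD top_incl h2 top_lift !top_mkcol mulmx0 addr0 add0r.
by rewrite !addE last_lift !last_mkcol last_incl add0r addr0.
Qed.

End Cols.

Section Good.
Variables (R : pzRingType) (k : fieldType).

Definition good (N : pmod R k) : Prop :=
  (forall a, pact N (1%:M : 'M[R]_a) (@VICzeroC R a) = 1%:M) /\
  (forall a b c (f1 : 'M[R]_(b,a)) C1 (f2 : 'M[R]_(c,b)) C2,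
     isVICmor f1 C1 -> isVICmor f2 C2 ->
     pact N (f2 *m f1) (VICcompC f2 C1 C2) = pact N f1 C1 *m pact N f2 C2) /\
  (forall a b (f : 'M[R]_(b,a)) C, isVICmor f C ->
     (psub N a *m pact N f C <= psub N b)%MS).

Lemma good_of (M : VICmod R k) : good (pmod_of M).
Proof.
split; first exact: vact_id.
split; first by move=> *; apply: vact_comp.
by move=> a b f C _ /=; rewrite mul0mx sub0mx.
Qed.

Lemma good_deriv (N : pmod R k) : good N -> good (pderiv N).
Proof.
case=> [h1 [h2 h3]]; split.
  by move=> a /=; rewrite lift1 liftC0 h1.
split.
  move=> a b c f1 C1 f2 C2 v1 v2 /=.
  by rewrite lift_mul liftC_comp h2 //; apply: liftVIC.
move=> a b f C v /=.
rewrite addsmxMr addsmx_sub; apply/andP; split.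
  by apply: (submx_trans (h3 _ _ _ _ (liftVIC v))); apply: addsmxSl.
rewrite -h2; [|exact: inclVIC|exact: liftVIC].
rewrite lift_incl liftC_incl h2 //; last exact: inclVIC.
by apply: (submx_trans (submxMl _ _)); apply: addsmxSr.
Qed.

End Good.

Section MxAlg.
Variable k : fieldType.

Lemma exprS_mx d (A : 'M[k]_d) e : A ^+ e.+1 = A ^+ e *m A.
Proof. by rewrite exprSr mulmxE. Qed.

Lemma expr_comm_mx d1 d2 (I : 'M[k]_(d1,d2)) A B e :
  I *m A = B *m I -> I *m A ^+ e = B ^+ e *m I.
Proof.
move=> h; elim: e => [|e IH]; first by rewrite !expr0 mulmx1 mul1mx.
by rewrite exprS_mx mulmxA IH -mulmxA h mulmxA -exprS_mx.
Qed.

Lemma sub_expr d1 d (S : 'M[k]_(d1, d)) (A : 'M[k]_d) e :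
  (S *m A <= S)%MS -> (S *m A ^+ e <= S)%MS.
Proof.
move=> h; elim: e => [|e IH]; first by rewrite expr0 mulmx1.
by rewrite exprS_mx mulmxA; apply: submx_trans (submxMr _ IH) h.
Qed.

Lemma conj_expr d (P P' A : 'M[k]_d) e : P *m P' = 1%:M -> P' *m P = 1%:M ->
  (P' *m A *m P) ^+ e = P' *m A ^+ e *m P.
Proof.
move=> h1 h2; elim: e => [|e IH]; first by rewrite !expr0 mulmx1.
rewrite !exprS_mx IH -!mulmxA; congr (_ *m _).
by rewrite [P *m _]mulmxA h1 mul1mx !mulmxA.
Qed.

End MxAlg.

Section PiLemmas.
Variable R : pzRingType.

Lemma perm_mulE n (t : {perm 'I_n}) m (A : 'M[R]_(n,m)) x y : (perm_mx t *m A) x y = A (t x) y.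
Proof. by rewrite -row_permE mxE. Qed.

Lemma CJ_char p (v : 'cV[R]_p.+2) :
  VICcompC (incl_mx R p.+1) (@incl_C R p) (@incl_C R p.+1) v <-> top (top v) = 0.
Proof.
split.
  move=> [c2 [c1 [/incl_C_top h2 /incl_C_top h1 ->]]].
  by rewrite topD h2 add0r top_incl.
move=> h; exists (v - incl_mx R p.+1 *m top v), (top v); split.
- by apply/incl_C_top; rewrite topD topN top_incl subrr.
- by apply/incl_C_top.
- by rewrite subrK.
Qed.

Lemma toptopE p (w : 'cV[R]_p.+2) x : top (top w) x 0 = w (wd (wd x)) 0.
Proof. by rewrite !mxE. Qed.

Lemma toptop_perm p (t : {perm 'I_p.+2}) (v : 'cV[R]_p.+2) :
  (forall x : 'I_p, t (wd (wd x)) = wd (wd x)) -> top (top (perm_mx t *m v)) = top (top v).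
Proof.
move=> ht; apply/matrixP => x y; rewrite (ord1 y) !toptopE perm_mulE.
by rewrite ht.
Qed.

Lemma piCJ p (t : {perm 'I_p.+2}) : (t * t = 1)%g ->
  (forall x : 'I_p, t (wd (wd x)) = wd (wd x)) ->
  VICcompC (perm_mx t) (VICcompC (incl_mx R p.+1) (@incl_C R p) (@incl_C R p.+1)) (@VICzeroC R _)
  = VICcompC (incl_mx R p.+1) (@incl_C R p) (@incl_C R p.+1).
Proof.
move=> htt ht; apply: predext => v; split.
  move=> [c2 [c1 [-> /CJ_char h1 ->]]]; apply/CJ_char.
  by rewrite add0r toptop_perm.
move=> /CJ_char hv; exists 0, (perm_mx t *m v); split => //.
- by apply/CJ_char; rewrite toptop_perm.
- by rewrite add0r mulmxA -perm_mxM htt perm_mx1 mul1mx.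
Qed.

Lemma piJ p (t : {perm 'I_p.+2}) :
  (forall x : 'I_p.+2, (x < p)%N -> t x = x) ->
  (forall x : 'I_p.+2, (p <= x)%N -> (p <= t x)%N) ->
  perm_mx t *m (incl_mx R p.+1 *m incl_mx R p) = incl_mx R p.+1 *m incl_mx R p.
Proof.
move=> h1 h2; apply/matrixP => x y; rewrite perm_mulE !incl_incl.
case: (ltnP x p) => hx; first by rewrite h1.
have := h2 x hx => hx'.
rewrite !(gtn_eqF (leq_trans (ltn_ord y) _)) //.
Qed.

End PiLemmas.

Section Main.
Variables (R : pzRingType) (k : fieldType) (N : pmod R k).
Hypothesis gN : good N.

Definition unit_mx n (g : 'M[R]_n) := exists g', g' *m g = 1%:M /\ g *m g' = 1%:M.

Lemma unitV n (g : 'M[R]_n) : unit_mx g -> isVICmor g (@VICzeroC R n).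
Proof. by case=> g' [h1 h2]; apply: (unitVIC h1 h2). Qed.

Lemma pactM n (g1 g2 : 'M[R]_n) : unit_mx g1 -> unit_mx g2 ->
  pact N (g2 *m g1) (@VICzeroC R n) = pact N g1 (@VICzeroC R n) *m pact N g2 (@VICzeroC R n).
Proof.
move=> u1 u2; case: gN => _ [h2 _].
by rewrite -{1}(compC0 g2) h2 //; apply: unitV.
Qed.

Lemma pact1 n : pact N (1%:M : 'M[R]_n) (@VICzeroC R n) = 1%:M.
Proof. by case: gN. Qed.

Lemma pact_inv n (g g' : 'M[R]_n) : g *m g' = 1%:M -> unit_mx g -> unit_mx g' ->
  pact N g' (@VICzeroC R n) *m pact N g (@VICzeroC R n) = 1%:M.
Proof. by move=> h u u'; rewrite -pactM // h pact1. Qed.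

Lemma unit_elem n (i j : 'I_n) (r : R) : i != j -> unit_mx (elem_mx i j r).
Proof. by move=> h; exists (elem_mx i j (- r)); rewrite elem_inv' ?elem_inv. Qed.

Lemma unit_perm n (t : {perm 'I_n}) : unit_mx (perm_mx t : 'M[R]_n).
Proof. by exists (perm_mx (t^-1)%g); rewrite perm_mxV' perm_mxV. Qed.

Lemma unit_lift n (g : 'M[R]_n) : unit_mx g -> unit_mx (lift_mx g).
Proof.
by case=> g' [h1 h2]; exists (lift_mx g'); rewrite -!lift_mul h1 h2 lift1.
Qed.

Lemma unit_mul n (g1 g2 : 'M[R]_n) : unit_mx g1 -> unit_mx g2 -> unit_mx (g1 *m g2).
Proof.
case=> g1' [a1 a2] [g2' [b1 b2]]; exists (g2' *m g1'); split.
  by rewrite mulmxA -(mulmxA g2') a1 mulmx1 b1.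
by rewrite mulmxA -(mulmxA g1) b2 mulmx1 a2.
Qed.

Lemma incl_comm q (g : 'M[R]_q) : unit_mx g ->
  pact N (incl_mx R q) (@incl_C R q) *m pact N (lift_mx g) (@VICzeroC R _) =
  pact N g (@VICzeroC R _) *m pact N (incl_mx R q) (@incl_C R q).
Proof.
move=> u; case: gN => _ [h2 _].
rewrite -h2; [|exact: inclVIC|exact/unitV/unit_lift].
rewrite -h2; [|exact: unitV|exact: inclVIC].
by rewrite lift_incl -liftC0 liftC_incl.
Qed.

Lemma S_stab a b (f : 'M[R]_(b,a)) C (A : 'M[k]_(pamb N a)) :
  isVICmor f C -> (A <= psub N a)%MS -> (A *m pact N f C <= psub N b)%MS.
Proof.
move=> v h; case: gN => _ [_ h3].
exact: submx_trans (submxMr _ h) (h3 _ _ _ _ v).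
Qed.

Lemma core p (o0 o1 : 'I_p) (r : R) e1 e2 : o0 != o1 ->
  (((pact N (elem_mx (wd (wd o0)) (wd (wd o1)) r) (@VICzeroC R _) - 1%:M) ^+ e1)
     <= psub N p.+2 + pact N (incl_mx R p.+1) (@incl_C R p.+1))%MS ->
  (((pact N (elem_mx (wd o0) (wd o1) r) (@VICzeroC R _) - 1%:M) ^+ e2)
     <= psub N p.+1 + pact N (incl_mx R p) (@incl_C R p))%MS ->
  (((pact N (elem_mx (wd (wd o0)) (wd (wd o1)) r) (@VICzeroC R _) - 1%:M) ^+ (e1 + e2).+1)
     <= psub N p.+2)%MS.
Proof.
move=> ho H1 H2.
have [h1 [h2 h3]] := gN.
pose mm (g : 'M[R]_p.+2) := pact N g (@VICzeroC R _).
pose i0 : 'I_p.+2 := wd (wd o0).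
pose j0 : 'I_p.+2 := wd (wd o1).
pose a : 'I_p.+2 := wd ord_max.
pose b : 'I_p.+2 := ord_max.
have hij : i0 != j0 by rewrite -val_eqE /=; rewrite val_eqE.
have hia : i0 != a by rewrite -val_eqE /= ltn_eqF.
have hja : j0 != a by rewrite -val_eqE /= ltn_eqF.
have hib : i0 != b by rewrite -val_eqE /=; apply/negbT/ltn_eqF; exact: (ltnW (ltn_ord o0)).
have hjb : j0 != b by rewrite -val_eqE /=; apply/negbT/ltn_eqF; exact: (ltnW (ltn_ord o1)).
have hab : a != b by rewrite -val_eqE /= ltn_eqF.
pose E := elem_mx i0 j0 r.
pose E' := elem_mx (wd o0) (wd o1) r : 'M[R]_p.+1.
have EE' : lift_mx E' = E by rewrite lift_elem.
pose S := psub N p.+2.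
pose X := mm E - 1%:M.
pose X' := pact N E' (@VICzeroC R _) - 1%:M.
pose I1 := pact N (incl_mx R p.+1) (@incl_C R p.+1).
pose I2 := pact N (incl_mx R p) (@incl_C R p).
have uE : unit_mx E by apply: unit_elem.
have uE' : unit_mx E' by apply: unit_elem; rewrite -val_eqE /= val_eqE.
have SX : (S *m X <= S)%MS.
  rewrite mulmxBr mulmx1; apply: addmx_sub; first exact: S_stab (unitV uE) (submx_refl _).
  by rewrite eqmx_opp.
have IX : I1 *m X = X' *m I1.
  rewrite /X /X' mulmxBr mulmxBl mulmx1 mul1mx; congr (_ - _).
  by rewrite -EE' incl_comm.
pose T := X ^+ (e1 + e2).
pose K := I2 *m I1.
have hT : (T <= S + K)%MS.
  rewrite /T exprD -mulmxE.
  apply: submx_trans (submxMr _ H1) _.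
  rewrite addsmxMr addsmx_sub; apply/andP; split.
    exact: submx_trans (sub_expr _ SX) (addsmxSl _ _).
  rewrite (expr_comm_mx _ IX).
  apply: submx_trans (submxMr _ H2) _.
  rewrite addsmxMr; apply: addsmxS; last exact: submx_refl.
  exact: S_stab (inclVIC _ _) (submx_refl _).
pose t := tperm a b.
pose P := perm_mx t : 'M[R]_p.+2.
have uP : unit_mx P by apply: unit_perm.
have tt : (t * t = 1)%g by rewrite /t -{1}tpermV mulVg.
have PP : mm P *m mm P = 1%:M.
  by rewrite -pactM // -perm_mxM tt perm_mx1 pact1.
have tfix : forall x : 'I_p.+2, (x < p)%N -> t x = x.
  move=> x hx; rewrite /t tpermD //; rewrite -val_eqE /= gtn_eqF //; exact: ltnW.
have KP : K *m mm P = K.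
  rewrite /K /I2 /I1 -h2; [|exact: inclVIC|exact: inclVIC].
  rewrite /mm /= -h2; [|exact: compVIC (inclVIC _ _) (inclVIC _ _)|exact: unitV].
  rewrite piCJ //; last by move=> x; apply: tfix => /=; exact: ltn_ord.
  rewrite piJ //; move=> x hx; rewrite /t.
  case: (tpermP a b x) => [_|_|]; rewrite /= ?leqnn //.
pose Xa := elem_mx i0 a (1 : R); pose Xa' := elem_mx i0 a (-1 : R).
pose Ya := elem_mx a j0 r; pose Ya' := elem_mx a j0 (-r).
pose Yb := elem_mx b j0 r; pose Yb' := elem_mx b j0 (-r).
have uXa : unit_mx Xa by apply: unit_elem.
have uXa' : unit_mx Xa' by apply: unit_elem.
have uYa : unit_mx Ya by apply: unit_elem; rewrite eq_sym.
have uYa' : unit_mx Ya' by apply: unit_elem; rewrite eq_sym.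
have uYb : unit_mx Yb by apply: unit_elem; rewrite eq_sym.
have uYb' : unit_mx Yb' by apply: unit_elem; rewrite eq_sym.
have decomp : E = Xa *m Ya *m Xa' *m Ya'.
  rewrite /Xa /Ya /E elem_comm3 //; last by rewrite eq_sym.
  rewrite -(mulmxA _ (elem_mx i0 a 1)) /Xa' elem_inv ?mulmx1 //.
  by rewrite -mulmxA elem_inv ?mulmx1 // eq_sym.
have cXY : Xa *m Yb = Yb *m Xa.
  by rewrite /Xa /Yb elem_mulC // eq_sym.
have triv : Xa *m Yb *m Xa' *m Yb' = 1%:M.
  rewrite cXY -(mulmxA Yb) /Xa /Xa' elem_inv ?mulmx1 //.
  by rewrite /Yb /Yb' elem_inv // eq_sym.
have tinv : (t^-1)%g = t by rewrite /t tpermV.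
have Ycong : forall s, elem_mx a j0 s = P *m elem_mx b j0 s *m P.
  move=> s; rewrite /P -{2}tinv elem_conj tinv /t tpermR tpermD //.
    by rewrite eq_sym.
  by rewrite eq_sym.
have mYa : forall s, mm (elem_mx a j0 s) = mm P *m mm (elem_mx b j0 s) *m mm P.
  move=> s; have ub : unit_mx (elem_mx b j0 s) by apply: unit_elem; rewrite eq_sym.
  rewrite Ycong /mm /= (@pactM _ P (P *m elem_mx b j0 s)) //; last exact: unit_mul.
  by rewrite (@pactM _ (elem_mx b j0 s) P) // mulmxA.
have mE : mm E = mm Ya' *m mm Xa' *m mm Ya *m mm Xa.
  have u1 : unit_mx (Xa *m Ya) by apply: unit_mul.
  have u2 : unit_mx (Xa *m Ya *m Xa') by apply: unit_mul.
  rewrite decomp /mm /= (@pactM _ Ya' (Xa *m Ya *m Xa')) //.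
  rewrite (@pactM _ Xa' (Xa *m Ya)) //.
  by rewrite (@pactM _ Ya Xa) // !mulmxA.
have m1 : mm Yb' *m mm Xa' *m mm Yb *m mm Xa = 1%:M.
  have u1 : unit_mx (Xa *m Yb) by apply: unit_mul.
  have u2 : unit_mx (Xa *m Yb *m Xa') by apply: unit_mul.
  have <- : mm (Xa *m Yb *m Xa' *m Yb') = mm Yb' *m mm Xa' *m mm Yb *m mm Xa.
    rewrite /mm /= (@pactM _ Yb' (Xa *m Yb *m Xa')) //.
    rewrite (@pactM _ Xa' (Xa *m Yb)) //.
    by rewrite (@pactM _ Yb Xa) // !mulmxA.
  by rewrite triv /mm /= pact1.
have comm_T : forall g, unit_mx g -> E *m g = g *m E -> mm g *m T = T *m mm g.
  move=> g ug hg; apply: expr_comm_mx.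
  rewrite /X mulmxBr mulmxBl mulmx1 mul1mx; congr (_ - _).
  by rewrite /mm /= -!pactM // hg.
have cXa : E *m Xa = Xa *m E by rewrite elem_mulC // eq_sym.
have cXa' : E *m Xa' = Xa' *m E by rewrite elem_mulC // eq_sym.
have cYb : E *m Yb = Yb *m E by rewrite elem_mulC // eq_sym.
have cYb' : E *m Yb' = Yb' *m E by rewrite elem_mulC // eq_sym.
have Sst : forall g (A : 'M[k]_(pamb N p.+2)), unit_mx g -> (A <= S)%MS -> (A *m mm g <= S)%MS.
  by move=> g A ug hA; apply: S_stab (unitV ug) hA.
have Vst : forall g (A : 'M[k]_(pamb N p.+2)), unit_mx g -> E *m g = g *m E ->
    (A <= T + S)%MS -> (A *m mm g <= T + S)%MS.
  move=> g A ug hg hA; apply: submx_trans (submxMr _ hA) _.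
  rewrite addsmxMr; apply: addsmxS; last exact: (Sst).
  by rewrite -comm_T //; apply: submxMl.
pose cm (A B : 'M[k]_(pamb N p.+2)) := (A - B <= S)%MS.
have cm_trans : forall A B C, cm A B -> cm B C -> cm A C.
  move=> A B C hAB hBC; rewrite /cm -(subrK B A) -addrA; exact: addmx_sub.
have cm_mul : forall g A B, unit_mx g -> cm A B -> cm (A *m mm g) (B *m mm g).
  by move=> g A B ug h; rewrite /cm -mulmxBl; apply: (Sst).
have hT' : (T <= K + S)%MS by rewrite addsmxC.
have Q1 : forall A, (A <= T + S)%MS -> cm (A *m mm P) A.
  move=> A hA.
  have hA' : (A <= K + S)%MS.
    apply: submx_trans hA _; rewrite addsmx_sub hT' /=; exact: addsmxSr.
  case/sub_addsmxP: hA' => [[u1 u2]] /= ->.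
  rewrite /cm mulmxDl -(mulmxA u1) -/K KP -mulmxA opprD addrACA subrr add0r.
  apply: addmx_sub; first exact: submx_trans (submxMl _ _) (Sst _ _ uP (submx_refl _)).
  by rewrite eqmx_opp; apply: submxMl.
have Q2 : forall s A, b != j0 -> E *m elem_mx b j0 s = elem_mx b j0 s *m E ->
    (A <= T + S)%MS -> cm (A *m mm (elem_mx a j0 s)) (A *m mm (elem_mx b j0 s)).
  move=> s A hb hc hA; have ub : unit_mx (elem_mx b j0 s) by apply: unit_elem.
  rewrite mYa !mulmxA; apply: (cm_trans _ (A *m mm (elem_mx b j0 s) *m mm P)).
    by apply: (cm_mul) => //; apply: (cm_mul) => //; apply: (Q1).
  by apply: (Q1); apply: (Vst).
have TS : (T <= T + S)%MS by apply: addsmxSl.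
have hbj : b != j0 by rewrite eq_sym.
have Q3 : cm (T *m mm E) T.
  rewrite mE !mulmxA.
  apply: (cm_trans _ (T *m mm Yb' *m mm Xa' *m mm Ya *m mm Xa)).
    by do 3! apply: (cm_mul) => //; apply: (Q2).
  apply: (cm_trans _ (T *m mm Yb' *m mm Xa' *m mm Yb *m mm Xa)).
    apply: (cm_mul) => //; apply: (Q2) => //.
    by apply: (Vst) => //; apply: (Vst).
  have -> : T *m mm Yb' *m mm Xa' *m mm Yb *m mm Xa = T *m (mm Yb' *m mm Xa' *m mm Yb *m mm Xa).
    by rewrite !mulmxA.
  by rewrite m1 mulmx1 /cm subrr sub0mx.
rewrite exprS_mx -/X -/T.
by move: Q3; rewrite /cm /X mulmxBr mulmx1.
Qed.

End Main.

Section Final.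
Variables (R : pzRingType) (k : fieldType).

Definition unip_prop (N : pmod R k) (u : nat) := forall n, (u <= n)%N ->
  forall (i j : 'I_n) (r : R), i != j ->
  exists e, (((pact N (elem_mx i j r) (@VICzeroC R n) - 1%:M) ^+ e) <= psub N n)%MS.

Lemma perm_two n (i j i0 j0 : 'I_n) : i != j -> i0 != j0 ->
  exists s : {perm 'I_n}, s i = i0 /\ s j = j0.
Proof.
move=> hij h0.
have h1 : tperm i i0 j != i0.
  apply/negP => /eqP h; move: hij; rewrite -(inj_eq (@perm_inj _ (tperm i i0))) tpermL h eqxx.
  by [].
have h2 : j0 != i0 by rewrite eq_sym.
exists (tperm i i0 * tperm (tperm i i0 j) j0)%g; rewrite !permM tpermL.
by split; [rewrite (tpermD h1 h2) | rewrite tpermL].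
Qed.

Lemma main_ind t : forall (N : pmod R k) m, good N -> poly_rec t N m -> exists u, unip_prop N u.
Proof.
elim: t => [|t IH] N m gN /=.
  move=> hv; exists m => n hn i j r hij; exists 0%N; rewrite expr0; exact: hv.
case=> _ hrec; have [u' hu'] := IH _ _ (good_deriv gN) hrec.
exists (u'.+4) => -[|[|p]] // hn i j r hij.
have hp : (1 < p)%N by lia.
have hp0 : (0 < p)%N by lia.
have hu1 : (u' <= p.+1)%N by lia.
have hu2 : (u' <= p)%N by lia.
pose o0 : 'I_p := Ordinal hp0; pose o1 : 'I_p := Ordinal hp.
have ho : o0 != o1 by rewrite -val_eqE.
have ho' : (wd o0 : 'I_p.+1) != wd o1 by rewrite -val_eqE.
have [e1 H1] := hu' p.+1 hu1 (wd o0) (wd o1) r ho'.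
have [e2 H2] := hu' p hu2 o0 o1 r ho.
rewrite /= lift_elem liftC0 in H1.
rewrite /= lift_elem liftC0 in H2.
have HC := core gN ho H1 H2.
have h0 : (wd (wd o0) : 'I_p.+2) != wd (wd o1) by rewrite -val_eqE.
have [s [hs1 hs2]] := perm_two hij h0.
have E : elem_mx i j r = perm_mx s *m elem_mx (wd (wd o0)) (wd (wd o1)) r *m perm_mx (s^-1)%g.
  by rewrite elem_conj -hs1 -hs2 !permK.
have uE0 : unit_mx (elem_mx (wd (wd o0)) (wd (wd o1)) r : 'M[R]_p.+2) by apply: unit_elem.
have uP := unit_perm R s; have uP' := unit_perm R (s^-1)%g.
have u1 : unit_mx (perm_mx s *m elem_mx (wd (wd o0)) (wd (wd o1)) r : 'M[R]_p.+2) by apply: unit_mul.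
exists (e1 + e2).+1.
rewrite E (pactM gN uP' u1) (pactM gN uE0 uP).
have BC : pact N (perm_mx (s^-1)%g) (@VICzeroC R _) *m pact N (perm_mx s) (@VICzeroC R _) = 1%:M.
  by apply: pact_inv => //; apply: perm_mxV.
have CB : pact N (perm_mx s) (@VICzeroC R _) *m pact N (perm_mx (s^-1)%g) (@VICzeroC R _) = 1%:M.
  by apply: pact_inv => //; apply: perm_mxV'.
set B := pact N (perm_mx (s^-1)%g) _; set C := pact N (perm_mx s) _.
set A := pact N (elem_mx _ _ r) _.
have -> : B *m (A *m C) - 1%:M = B *m (A - 1%:M) *m C.
  by rewrite mulmxBr mulmxBl mulmx1 BC mulmxA.
rewrite conj_expr //.
apply: (S_stab gN (unitV uP)).
exact: submx_trans (submxMl _ _) HC.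
Qed.

End Final.

Theorem lemma12p2 (R : pzRingType) (k : fieldType)
  (hk : [pchar k] =i pred0)
  (M : VICmod R k) (d : int) (m : nat) (hd : -1 <= d)
  (hM : VICpolynomial M d m) :
  exists u : nat, forall n : nat, (u <= n)%N ->
    forall (i j : 'I_n) (r : R), i != j -> r != 0 ->
      unipotent (vact M (elem_mx i j r) (@VICzeroC R n)).
Proof.
have [t ht] : exists t, poly_rec t (pmod_of M) m.
  by case: d hM {hd} => [n|[|n]] //= h; [exists n.+1 | exists 0%N].
have [u hu] := main_ind (good_of M) ht.
exists u => n hn i j r hij _.
have [e he] := hu n hn i j r hij.
by exists e; apply/eqP; rewrite -submx0.
Qed.
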